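(* For each prime $p$, we have $\mathcal U_p=\bigcup_{k\ge1}\mathcal U_{p,k}$.
   Context: For a prime $p$, $\mathcal U_p$ is the set of positive integers that divide $p^n+1$ for some positive integer $n$. For coprime integers $a,b$ with $b>0$, $\ell_a(b)$ is the multiplicative order of $a$ modulo $b$; $v_l(n)$ is the exponent of the prime $l$ in $n$. For a prime $p$ and positive integer $k$, $\mathcal U_{p,k}$ is the set of positive integers $d$ coprime to $p$ such that: for each odd prime $r\mid d$ we have $v_2(\ell_p(r))=k$; if $p>2$ and $k=1$ then $v_2(d)\le v_2(p+1)$; and if $p>2$ and $k>1$ then $v_2(d)\le 1$. *)

(* Defs.v *)
From mathcomp Require Import all_boot.
Set Implicit Arguments. Unset Strict Implicit. Unset Printing Implicit Defensive.

(* Multiplicative order ell_a(b) of a modulo b: the least n >= 1 with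
   a^n = 1 (mod b), searched in 1..b (which suffices whenever
   coprime a b and b > 0, as the order is <= totient b <= b). *)
Definition mult_ord (a b : nat) : nat :=
  (find (fun n => a ^ n.+1 == 1 %[mod b]) (iota 0 b)).+1.

Definition U (p d : nat) : Prop :=
  0 < d /\ exists n, 0 < n /\ d %| p ^ n + 1.

Definition Uk (p k d : nat) : Prop :=
  [/\ 0 < d, coprime d p,
      (forall r, prime r -> odd r -> r %| d -> logn 2 (mult_ord p r) = k),
      (2 < p -> k = 1 -> logn 2 d <= logn 2 p.+1)
    & (2 < p -> 1 < k -> logn 2 d <= 1)].

(* Main.v *)
Require Import Defs.
From mathcomp Require Import all_boot all_fingroup all_solvable zify.

Lemma ord_spec p r : prime r -> coprime p r ->
  [/\ 0 < mult_ord p r, p ^ mult_ord p r = 1 %[mod r]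
    & forall n, p ^ n = 1 %[mod r] -> mult_ord p r %| n].
Proof.
move=> pr cop.
have r2 : 1 < r by apply: prime_gt1.
have Fe : p ^ r.-1 = 1 %[mod r] by rewrite -totient_prime // Euler_exp_totient.
set P := (fun n => p ^ n.+1 == 1 %[mod r]).
have hP : has P (iota 0 r).
  apply/hasP; exists r.-2; first by rewrite mem_iota; lia.
  rewrite /P; have -> : r.-2.+1 = r.-1 by move: r2; clear; case: r => [|[|r]].
  by apply/eqP.
have flt : find P (iota 0 r) < r by rewrite has_find size_iota in hP.
have Pf : P (find P (iota 0 r)).
  by have := nth_find 0 hP; rewrite nth_iota.
rewrite /mult_ord -/P; split => //; first exact/eqP.
move=> n Hn; set f := find P (iota 0 r).
have Pf' := eqP Pf.
rewrite /dvdn; apply/negPn/negP => Hi.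
have ilt : n %% f.+1 < f.+1 by rewrite ltn_mod.
have Hpi : p ^ (n %% f.+1) = 1 %[mod r].
  move: Hn; rewrite {1}(divn_eq n f.+1) expnD [n %/ _ * _]mulnC expnM.
  by rewrite -modnMml -modnXm Pf' modnXm exp1n modnMml mul1n.
have i0 : 0 < n %% f.+1 by rewrite lt0n.
have ilt' : (n %% f.+1).-1 < f by rewrite -ltnS prednK.
have := before_find 0 ilt'.
rewrite nth_iota; last by apply: leq_trans flt; apply: leq_trans ilt' _.
rewrite add0n /P prednK // Hpi eqxx //.
Qed.
Arguments ord_spec {p r}.

Lemma sq1 x : x ^ 2 - 1 = (x - 1) * (x + 1).
Proof. by rewrite -subn_sqr exp1n. Qed.

Lemma mod1_dvd r x : 0 < x -> (x == 1 %[mod r]) = (r %| x - 1).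
Proof. by move=> x0; rewrite eqn_mod_dvd. Qed.

Lemma ord_pow p r m : prime r -> coprime p r -> mult_ord p r %| m ->
  p ^ m = 1 %[mod r].
Proof.
move=> pr cop; have [_ Ho _] := ord_spec pr cop.
by case/dvdnP=> k ->; rewrite mulnC expnM -modnXm Ho modnXm exp1n.
Qed.

Arguments ord_pow {p r m}.

Lemma odd_prime_dvd2 r : prime r -> odd r -> r %| 2 -> False.
Proof.
move=> pr od /(dvdn_leq (isT : 0 < 2)) le2; have := prime_gt1 pr.
by case: r pr od le2 => [|[|[|r]]].
Qed.

Lemma pos_of_coprime p r : prime r -> coprime p r -> 0 < p.
Proof.
move=> pr; case: p => [|n] //.
by rewrite /coprime gcd0n => /eqP r1; rewrite r1 in pr.
Qed.

Arguments pos_of_coprime {p r}.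

Lemma ord_char p r n : prime r -> odd r -> coprime p r ->
  (r %| p ^ n + 1) = (mult_ord p r %| n.*2) && ~~ (mult_ord p r %| n).
Proof.
move=> pr od cop; have [o0 Ho Hmin] := ord_spec pr cop.
have x1 : 0 < p ^ n by rewrite expn_gt0 (pos_of_coprime pr cop).
have e2 : p ^ n.*2 = (p ^ n) ^ 2 by rewrite -muln2 expnM.
apply/idP/andP.
- move=> H; split.
  + apply: Hmin; apply/eqP; rewrite mod1_dvd ?expn_gt0 ?(pos_of_coprime pr cop) //.
    by rewrite e2 sq1 dvdn_mull.
  + apply/negP => od'; have := ord_pow pr cop od'.
    move/eqP; rewrite mod1_dvd // => H2.
    apply: (odd_prime_dvd2 _ pr od).
    have e : (p ^ n + 1) - (p ^ n - 1) = 2.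
      by rewrite subnBA // -addnA addKn.
    by rewrite -e; apply: dvdn_sub.
- case=> d2 nd; have := ord_pow pr cop d2.
  move/eqP; rewrite mod1_dvd ?expn_gt0 ?(pos_of_coprime pr cop) //.
  rewrite e2 sq1 Euclid_dvdM // => /orP [] // H.
  by move: nd; rewrite Hmin //; apply/eqP; rewrite mod1_dvd.
Qed.

Lemma v2_ord o n : 0 < o -> 0 < n -> o %| n.*2 -> ~~ (o %| n) ->
  logn 2 o = (logn 2 n).+1.
Proof.
move=> o0 n0 d2 nd.
have [v cv Eo] := pfactor_coprime (isT : prime 2) o0.
have [w cw En] := pfactor_coprime (isT : prime 2) n0.
set a := logn 2 o in Eo *; set t := logn 2 n in En *.
have E2 : n.*2 = w * 2 ^ t.+1 by rewrite -muln2 {1}En -mulnA -expnSr.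
rewrite E2 Eo in d2.
have ha : 2 ^ a %| 2 ^ t.+1.
  have := dvdn_mull v (dvdnn (2 ^ a)) => /dvdn_trans /(_ d2).
  by rewrite Gauss_dvdr // coprimeXl // coprime_sym.
have hv : v %| w.
  have := dvdn_mulr (2 ^ a) (dvdnn v) => /dvdn_trans /(_ d2).
  by rewrite Gauss_dvdl // coprimeXr // coprime_sym.
rewrite dvdn_Pexp2l // in ha.
case: (ltngtP a t.+1) ha => // lt _.
move: nd; rewrite Eo En dvdn_mul //.
by rewrite dvdn_exp2l // -ltnS.
Qed.

Lemma odd_sq4 x : odd x -> x ^ 2 = 1 %[mod 4].
Proof.
move=> ox; rewrite -(odd_double_half x) ox.
move: (x./2) => h.
have -> : (true + h.*2) ^ 2 = (h * h + h) * 4 + 1.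
  rewrite -muln2 /=; nia.
by rewrite modnMDl.
Qed.

Lemma odd_sq_pow2 p v : odd p -> p + 1 = 0 %[mod 2 ^ v] ->
  p ^ 2 = 1 %[mod 2 ^ v.+1].
Proof.
move=> op hv; have p0 : 0 < p by move: op; clear; case: p.
apply/eqP; rewrite mod1_dvd; last by rewrite expn_gt0 p0.
rewrite sq1 expnS; apply: dvdn_mul; last by rewrite /dvdn hv mod0n.
by rewrite dvdn2 oddB // op.
Qed.

Lemma fwd p d n : prime p -> 0 < d -> 0 < n -> d %| p ^ n + 1 ->
  Uk p (logn 2 n).+1 d.
Proof.
move=> pp d0 n0 dd.
have p0 := prime_gt0 pp.
have cop : coprime d p.
  apply: (@coprime_dvdl _ _ _ dd); rewrite -coprime_modl.
  have -> : p ^ n = p ^ n.-1 * p by rewrite -expnSr prednK.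
  by rewrite modnMDl coprime_modl coprime1n.
split => //.
- move=> r pr odr rd.
  have crp : coprime p r by rewrite coprime_sym; apply: (@coprime_dvdl _ _ _ rd).
  have [o0 _ _] := ord_spec pr crp.
  have := ord_char p r n pr odr crp; rewrite (dvdn_trans rd dd) => /esym/andP [h1 h2].
  by apply: v2_ord.
- move=> p2 /eqP; rewrite eqSS => /eqP l0.
  have op : odd p by case/even_prime: pp => // e; rewrite e in p2.
  have [w cw En] := pfactor_coprime (isT : prime 2) n0.
  rewrite l0 expn0 muln1 in En.
  have on : odd n by rewrite En -coprime2n.
  set v := logn 2 p.+1.
  rewrite leqNgt; apply/negP => lt.
  have hd : 2 ^ v.+1 %| p ^ n + 1 by apply: dvdn_trans dd; rewrite pfactor_dvdn.
  have hv : p + 1 = 0 %[mod 2 ^ v] by apply/eqP; rewrite mod0n -/(dvdn _ _) addn1 pfactor_dvdnn.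
  have sq := odd_sq_pow2 p v op hv.
  have : p ^ n = p %[mod 2 ^ v.+1].
    rewrite -(odd_double_half n) on -muln2 addnC expnD [n./2 * 2]mulnC expnM.
    by rewrite -modnMml -modnXm sq modnXm exp1n modnMml /= mul1n expn1.
  move=> e; move: hd; rewrite /dvdn -modnDml e modnDml -/(dvdn _ _) addn1.
  by rewrite pfactor_dvdn // ltnn.
- move=> p2 k1.
  have op : odd p by case/even_prime: pp => // e; rewrite e in p2.
  have : 2 ^ 1 %| n by rewrite pfactor_dvdn.
  case/dvdnP => j En; rewrite En in dd.
  rewrite leqNgt; apply/negP => lt.
  have hd : 2 ^ 2 %| p ^ (j * 2 ^ 1) + 1 by apply: dvdn_trans dd; rewrite pfactor_dvdn.
  move: hd; rewrite expnM /dvdn -modnDml odd_sq4 //; last by rewrite oddX op orbT.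
Qed.


Lemma cop_test m x : (forall r, prime r -> r %| m -> ~~ (r %| x)) -> coprime m x.
Proof.
move=> H; rewrite /coprime; case: (ltngtP (gcdn m x) 1) => // g.
- have g0 : gcdn m x = 0 by move: g; case: (gcdn m x).
  have := dvdn_gcd 2 m x; rewrite g0 dvdn0 => /esym/andP [h1 h2].
  by move: (H 2 isT h1); rewrite h2.
- have := dvdn_gcd (pdiv (gcdn m x)) m x; rewrite pdiv_dvd => /esym/andP [h1 h2].
  by move: (H _ (pdiv_prime g) h1); rewrite h2.
Qed.

Lemma odd_of_dvd r m : r %| m -> odd m -> odd r.
Proof.
move=> rm om; apply/negPn/negP; rewrite -dvdn2 => h2.
by move: om; rewrite -[odd m]negbK -dvdn2 (dvdn_trans h2 rm).
Qed.

Lemma lift m w t : odd m -> 0 < w ->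
  (forall r, prime r -> r %| m -> r %| w + 1) ->
  w ^ (2 ^ t) = 1 %[mod m] -> m %| w + 1.
Proof.
move=> om w0 Hr.
have both r y : prime r -> r %| m -> 0 < y -> r %| y - 1 -> r %| y + 1 -> False.
  move=> pr rm y0 h1 h2; apply: (odd_prime_dvd2 _ pr (odd_of_dvd _ _ rm om)).
  have e : (y + 1) - (y - 1) = 2 by rewrite subnBA // -addnA addKn.
  by rewrite -e; apply: dvdn_sub.
have cw : coprime m (w - 1).
  apply: cop_test => r pr rm; apply/negP => h; exact: (both r w pr rm w0 h (Hr r pr rm)).
elim: t => [|t IH].
- rewrite expn0 expn1 => /eqP; rewrite mod1_dvd // => h.
  move: cw; rewrite /coprime (gcdn_idPl h) => /eqP ->; exact: dvd1n.
- have x0 : 0 < w ^ (2 ^ t) by rewrite expn_gt0 w0.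
  rewrite expnSr expnM => /eqP; rewrite mod1_dvd ?expn_gt0 ?x0 //. rewrite sq1.
  case: t IH x0 => [|t] IH x0.
    by rewrite expn0 expn1 Gauss_dvdr.
  rewrite Gauss_dvdl.
    by move=> h; apply: IH; apply/eqP; rewrite mod1_dvd.
  apply: cop_test => r pr rm; apply/negP => h2.
  apply: (both r _ pr rm x0 _ h2).
  have w2 : w ^ 2 = 1 %[mod r].
    by apply/eqP; rewrite mod1_dvd ?expn_gt0 ?w0 // sq1 dvdn_mull // Hr.
  rewrite -mod1_dvd // expnS expnM -modnXm w2 modnXm exp1n.
  by [].
by rewrite w0.
Qed.

Lemma pplus1 p u : 0 < p -> odd u -> p + 1 %| p ^ u + 1.
Proof.
move=> p0 ou.
have sq : p ^ 2 = 1 %[mod p + 1].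
  by apply/eqP; rewrite mod1_dvd ?expn_gt0 ?p0 // sq1 dvdn_mull.
have eu : p ^ u = (p ^ 2) ^ (u./2) * p.
  by rewrite -expnM -expnSr mul2n -[in LHS](odd_double_half u) ou.
rewrite /dvdn eu -modnDml -modnMml -modnXm sq modnXm exp1n modnMml mul1n.
by rewrite modnDml modnn.
Qed.

Lemma bwd p k d : prime p -> 0 < k -> Uk p k d -> U p d.
Proof.
move=> pp k0 [d0 cop Hr H1 H2].
have p0 := prime_gt0 pp.
have [m cm Ed] := pfactor_coprime (isT : prime 2) d0.
set a := logn 2 d in Ed H1 H2.
have m0 : 0 < m by move: d0; rewrite Ed muln_gt0 => /andP [].
have om : odd m by rewrite -coprime2n.
have md : m %| d by rewrite Ed dvdn_mulr.
have cmp : coprime m p by apply: (@coprime_dvdl _ _ _ md).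
have T0 : 0 < totient m by rewrite totient_gt0.
have [u cu ET] := pfactor_coprime (isT : prime 2) T0.
set s := logn 2 (totient m) in ET.
have ou : odd u by rewrite -coprime2n.
have u0 : 0 < u by case: u ou {cu ET}.
set n0 := u * 2 ^ k.-1.
have n00 : 0 < n0 by rewrite muln_gt0 u0 expn_gt0.
have Eu : p ^ totient m = 1 %[mod m] by apply: Euler_exp_totient; rewrite coprime_sym.
have Hprime : forall r, prime r -> r %| m -> r %| p ^ n0 + 1.
  move=> r pr rm.
  have odr : odd r := odd_of_dvd _ _ rm om.
  have rd : r %| d := dvdn_trans rm md.
  have crp : coprime p r by rewrite coprime_sym; apply: (@coprime_dvdl _ _ _ rd).
  have lk := Hr r pr odr rd.
  have [o0 _ Hmin] := ord_spec pr crp.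
  have oT : mult_ord p r %| totient m.
    apply: Hmin; by rewrite -(modn_dvdm _ rm) Eu (modn_dvdm _ rm).
  have [o' co' Eo] := pfactor_coprime (isT : prime 2) o0.
  rewrite lk in Eo.
  have o'u : o' %| u.
    have : o' %| u * 2 ^ s by rewrite -ET; apply: dvdn_trans oT; rewrite Eo dvdn_mulr.
    by rewrite Gauss_dvdl // coprimeXr // coprime_sym.
  rewrite ord_char //; apply/andP; split.
    by rewrite Eo /n0 -muln2 -mulnA -expnSr prednK // dvdn_mul.
  apply/negP; rewrite Eo /n0 => h.
  have : 2 ^ k %| u * 2 ^ k.-1 by apply: dvdn_trans h; apply: dvdn_mull.
  rewrite Gauss_dvdr; last by rewrite coprimeXl.
  by rewrite dvdn_Pexp2l // -ltnS prednK // ltnn.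
have w0 : 0 < p ^ n0 by rewrite expn_gt0 p0.
have mw : m %| p ^ n0 + 1.
  apply: (lift m (p ^ n0) s.+1) => //.
  rewrite -expnM /n0 -mulnA -expnD addnS -addSn prednK // addnC expnD mulnA -ET.
  by rewrite expnM -modnXm Eu modnXm exp1n.
have aw : 2 ^ a %| p ^ n0 + 1.
  case: a H1 H2 Ed => [|a] H1 H2 Ed; first by rewrite expn0 dvd1n.
  have p2 : 2 < p.
    case: (ltngtP p 2) => // [lt|e]; first by have := prime_gt1 pp; move: lt; clear; lia.
    by move: cop; rewrite e Ed coprimeMl coprime_pexpl // andbF.
  have op : odd p by case/even_prime: pp => // e; rewrite e in p2.
  case: (ltngtP k 1) => [|lt|e].
  - by move: k0; clear; lia.
  - apply: dvdn_trans (_ : 2 %| _); last by rewrite dvdn2 addn1 /= oddX op orbT.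
    by rewrite -{2}(expn1 2) dvdn_exp2l // H2.
  - have n0u : n0 = u by rewrite /n0 e expn0 muln1.
    rewrite n0u; apply: dvdn_trans (pplus1 _ _ p0 ou).
    apply: dvdn_trans (pfactor_dvdnn 2 (p + 1)); rewrite dvdn_exp2l //.
    by rewrite addn1 H1.
split => //; exists n0; split => //.
rewrite Ed Gauss_dvd ?mw ?aw //.
by rewrite coprimeXr // coprime_sym.
Qed.

Theorem lemma2 (p : nat) : prime p ->
  forall d : nat, U p d <-> exists2 k, 0 < k & Uk p k d.
Proof.
move=> pp d; split.
- case=> d0 [n [n0 dd]]; exists (logn 2 n).+1 => //.
  exact: fwd.
- by case=> k k0 h; exact: (bwd p k d pp k0 h).
Qed.
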